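(* Let $T$ be a code tree for $\mathcal S$ as in the context, with $1/2\le P_R<1$, let $N\ge 2$ and $k=\lceil \lg N\rceil$, and let $L^{(\mathrm I)}_N$ be the average code length of the Type-I AEDS with $N$ states built on $T$. Then $$L_T-L^{(\mathrm I)}_N=\frac{1-P_R^{N-1}}{1-P_R^{N}}\,P_R+\frac{1-P_R^{\,2^k-N}}{1-P_R^{N}}\,(1-P_R)-k(1-P_R),$$ so the reduction $\delta^{(\mathrm I)}_N(P_R):=[L_T-L^{(\mathrm I)}_N]_0$ equals the positive part of this expression, where $[u]_0=\max\{u,0\}$. In particular $\delta^{(\mathrm I)}_2(P_R)=\left[\frac{P_R^2+P_R-1}{1+P_R}\right]_0$, which is positive whenever $P_R>\omega^{(\mathrm I)}:=(\sqrt5-1)/2\approx0.6180$.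
   Context: Let $\mathcal S$ be a finite alphabet with $|\mathcal S|\ge 2$ and $p=\{p(s)\}_{s\in\mathcal S}$ a probability distribution with $p(s)>0$ for all $s$ (symbols are i.i.d. with law $p$). Let $\mathcal B=\{0,1\}^*$ be the set of finite binary words (including the empty word), $l(\beta)$ the length of $\beta$, and $\lg=\log_2$. An AEDS (asymmetric encoding–decoding scheme) with finite state set $\mathcal X$, $|\mathcal X|=N$, consists of maps $E_{\hat x}:\mathcal S\to\mathcal B$ and $F^-_{\hat x}:\mathcal S\to\mathcal X$ for each $\hat x\in\mathcal X$ such that, for every $x\in\mathcal X$, the words $E_{\hat x}(s)$ over all pairs $(\hat x,s)$ with $F^-_{\hat x}(s)=x$ are pairwise distinct and form a prefix-free set $\mathcal B^{(D)}_x$. (A sequence is encoded backward: from state $\hat x_t$ output $E_{\hat x_t}(s_t)$ and move to $F^-_{\hat x_t}(s_t)$.) The state chain is the Markov chain on $\mathcal X$ moving from $\hat x$ to $F^-_{\hat x}(s)$ with probability $p(s)$. For a stationary distribution $Q$ of this chain (unique when the chain is irreducible), the average code length is $L=\sum_{\hat x\in\mathcal X}\sum_{s\in\mathcal S}p(s)Q(\hat x)\,l(E_{\hat x}(s))$. Code tree: $T$ is a binary prefix-free code for $\mathcal S$ with codeword $c_T(s)$ of length $l_T(s)\ge1$, and $L_T=\sum_s p(s)l_T(s)$. $\mathcal S_R$ (resp. $\mathcal S_L$) is the set of symbols whose codeword starts in the right (resp. left) subtree of the root; both are assumed nonempty; $P_R=\sum_{s\in\mathcal S_R}p(s)$, $P_L=1-P_R$,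 labeled so that $P_R\ge 1/2$. For $s\in\mathcal S_R$ (resp. $\mathcal S_L$), $t_R(s)$ (resp. $t_L(s)$) is $c_T(s)$ with its first bit deleted. Type-I AEDS with $N\ge2$ states $\alpha_1,\dots,\alpha_N$ built on $T$: let $k=\lceil\lg N\rceil$ and let $\pi_1,\dots,\pi_N$ be a prefix-free set of binary words with $l(\pi_j)=k-1$ for $1\le j\le 2^k-N$ and $l(\pi_j)=k$ for $2^k-N<j\le N$. For $s\in\mathcal S_R$: $F^-_{\alpha_j}(s)=\alpha_{j+1}$, $E_{\alpha_j}(s)=t_R(s)$ for $1\le j\le N-1$, and $F^-_{\alpha_N}(s)=\alpha_1$, $E_{\alpha_N}(s)=0\,t_R(s)$. For $s\in\mathcal S_L$ and every $j$: $F^-_{\alpha_j}(s)=\alpha_1$, $E_{\alpha_j}(s)=1\,\pi_j\,t_L(s)$ (concatenation). Its state chain is irreducible and aperiodic, so $Q$ is unique. *)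

(* Defs.v *)
From mathcomp Require Import all_boot all_order all_algebra.
Set Implicit Arguments.
Unset Strict Implicit.
Unset Printing Implicit Defensive.
Import Order.TTheory GRing.Theory Num.Theory.
Local Open Scope ring_scope.

(* Binary words are [seq bool]; bit 0 = false, bit 1 = true. *)

(* A family of binary words indexed by a finite type is a prefix-free set of
   pairwise distinct words: no word is a prefix of a word with another index
   (this also forbids equal words at distinct indices). *)
Definition prefix_free (I : finType) (c : I -> seq bool) : Prop :=
  forall i j : I, i != j -> ~~ prefix (c i) (c j).

Definition ceil_lg (N : nat) : nat := up_log 2 N.

(* State chain of an AEDS with next-state map F : X -> S -> X : moves from x
   to F x s with probability p s.  Q is a stationary distribution. *)
Definition stationary (R : numDomainType) (S X : finType) (p : S -> R)
  (F : X -> S -> X) (Q : X -> R) : Prop :=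
  [/\ forall x, 0 <= Q x,
      \sum_(x : X) Q x = 1 &
      forall y : X, Q y = \sum_(x : X) \sum_(s : S | F x s == y) p s * Q x].

Definition avg_len (R : numDomainType) (S X : finType) (p : S -> R)
  (E : X -> S -> seq bool) (Q : X -> R) : R :=
  \sum_(x : X) \sum_(s : S) p s * Q x * (size (E x s))%:R.

(* c : S -> seq bool is the code of T, rb is the first bit of the right subtree. *)
Definition inR (S : finType) (c : S -> seq bool) (rb : bool) (s : S) : bool :=
  nth false (c s) 0 == rb.

Definition L_T (R : numDomainType) (S : finType) (p : S -> R) (c : S -> seq bool) : R :=
  \sum_(s : S) p s * (size (c s))%:R.

Definition P_R (R : numDomainType) (S : finType) (p : S -> R)
  (c : S -> seq bool) (rb : bool) : R :=
  \sum_(s : S | inR c rb s) p s.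

Definition tcut (S : finType) (c : S -> seq bool) (s : S) : seq bool := behead (c s).

(* State alpha_{j+1} is represented by j : 'I_N (0-based). *)
Definition first_state (N : nat) (j : 'I_N) : 'I_N := insubd j 0%N.

Definition typeI_F (S : finType) (c : S -> seq bool) (rb : bool) (N : nat)
  (j : 'I_N) (s : S) : 'I_N :=
  if inR c rb s then ordS j          (* alpha_j -> alpha_{j+1}, alpha_N -> alpha_1 *)
  else first_state j.

Definition typeI_E (S : finType) (c : S -> seq bool) (rb : bool) (N : nat)
  (pi : 'I_N -> seq bool) (j : 'I_N) (s : S) : seq bool :=
  if inR c rb s then
    (if (j < N.-1)%N then tcut c s else false :: tcut c s)
  else true :: (pi j ++ tcut c s).

(* Main.v *)
Require Import Defs.
From mathcomp Require Import all_boot all_order all_algebra.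
From mathcomp Require Import ring lra zify.
Import Order.TTheory GRing.Theory Num.Theory.
Local Open Scope ring_scope.

Lemma geo (R : comPzRingType) (P : R) n : (1 - P) * \sum_(i < n) P ^+ i = 1 - P ^+ n.
Proof. by rewrite -[1 - P ^+ n]opprB subrX1 -mulNr opprB. Qed.

Lemma narrow_geo (R : comPzRingType) (P : R) N n : (n <= N)%N ->
  \sum_(x < N) P ^+ x * (x < n)%:R = \sum_(i < n) P ^+ i.
Proof.
move=> le; rewrite (eq_bigr (fun x : 'I_N => if (x < n)%N then P ^+ x else 0)).
  by rewrite -big_mkcond /= (big_ord_narrow le).
by move=> x _; case: ltnP; rewrite ?mulr1 ?mulr0.
Qed.

Lemma sum_ordS (R : comPzRingType) N (Q : 'I_N -> R) (y : 'I_N) :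
  \sum_(x < N) Q x * (ordS x == y)%:R = Q (ord_pred y).
Proof.
rewrite (bigD1 (ord_pred y)) //= ord_predK eqxx mulr1 big1 ?addr0 // => x Hx.
suff -> : (ordS x == y) = false by rewrite mulr0.
by apply/negbTE; apply: contra Hx => /eqP <-; rewrite ordSK.
Qed.

Theorem theorem1 (R : rcfType) (S : finType) (p : S -> R)
  (c : S -> seq bool) (rb : bool) (N : nat) (pi : 'I_N -> seq bool) :
  (1 < #|S|)%N ->
  (forall s, 0 < p s) -> \sum_(s : S) p s = 1 ->
  (forall s, (0 < size (c s))%N) -> prefix_free c ->
  (exists s, inR c rb s) -> (exists s, ~~ inR c rb s) ->
  1 / 2 <= P_R p c rb -> P_R p c rb < 1 ->
  (2 <= N)%N ->
  prefix_free pi ->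
  (forall j : 'I_N, size (pi j) =
     if (j < 2 ^ ceil_lg N - N)%N then (ceil_lg N).-1 else ceil_lg N) ->
  let P := P_R p c rb in
  let k := ceil_lg N in
  [/\ exists Q : 'I_N -> R, stationary p (typeI_F c rb (N:=N)) Q,
      forall Q : 'I_N -> R, stationary p (typeI_F c rb (N:=N)) Q ->
        L_T p c - avg_len p (typeI_E c rb pi) Q =
          (1 - P ^+ (N - 1)) / (1 - P ^+ N) * P
          + (1 - P ^+ (2 ^ k - N)) / (1 - P ^+ N) * (1 - P)
          - k%:R * (1 - P),
      N = 2%N -> forall Q : 'I_N -> R, stationary p (typeI_F c rb (N:=N)) Q ->
        Num.max (L_T p c - avg_len p (typeI_E c rb pi) Q) 0 =
          Num.max ((P ^+ 2 + P - 1) / (1 + P)) 0 &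
      (Num.sqrt 5 - 1) / 2 < P -> 0 < Num.max ((P ^+ 2 + P - 1) / (1 + P)) 0].
Proof.
move=> HS pp psum csz cpf [sR HsR] [sL HsL] Phalf Plt1 N2 pipf pisz P k.
have P0 : 0 < P by apply: lt_le_trans Phalf; lra.
have N0 : (0 < N)%N by apply: leq_trans N2.
have sumL : \sum_(s | ~~ inR c rb s) p s = 1 - P.
  by rewrite -psum /P /P_R [X in _ = X - _](bigID (inR c rb)) /= addrC addrK.
have fsE : forall x : 'I_N, first_state x = Ordinal N0.
  by move=> x; apply/val_inj; rewrite /first_state val_insubd N0.
have weight : forall (Q : 'I_N -> R) (x y : 'I_N),
  \sum_(s | typeI_F c rb x s == y) p s * Q x =
    Q x * ((ordS x == y)%:R * P + (Ordinal N0 == y)%:R * (1 - P)).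
  move=> Q x y; rewrite -big_distrl /= mulrC; congr (_ * _).
  rewrite (bigID (inR c rb)) /=.
  rewrite (eq_bigl (fun s => (ordS x == y) && inR c rb s)); last first.
    by move=> s; rewrite /typeI_F; case: (inR c rb s); rewrite ?andbT ?andbF.
  rewrite [X in _ + X](eq_bigl (fun s => (Ordinal N0 == y) && ~~ inR c rb s)); last first.
    by move=> s; rewrite /typeI_F fsE; case: (inR c rb s); rewrite ?andbT ?andbF.
  case: (ordS x == y); case: (Ordinal N0 == y); rewrite /= ?big_pred0_eq ?sumL /P /P_R; lra.
have rhs : forall Q : 'I_N -> R, \sum_x Q x = 1 -> forall y,
  \sum_x \sum_(s | typeI_F c rb x s == y) p s * Q x =
    P * Q (ord_pred y) + (Ordinal N0 == y)%:R * (1 - P).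
  move=> Q sQ y; under eq_bigr do rewrite weight mulrDr.
  rewrite big_split /= -(@sum_ordS _ _ Q y) big_distrr /= -big_distrl /= sQ mul1r.
  by congr (_ + _); apply: eq_bigr => x _; ring.
have PN1 : P ^+ N < 1 by rewrite exprn_ilt1 ?(ltW P0) // -lt0n.
have Dn0 : 1 - P ^+ N != 0 by rewrite subr_eq0 eq_sym lt_eqF.
set cc := (1 - P) / (1 - P ^+ N).
have HN : (N.-1 < N)%N by rewrite ltn_predL.
have op0 : ord_pred (Ordinal N0) = Ordinal HN.
  by apply/val_inj => /=; rewrite add0n modn_small.
have opS : forall j (H : (j.+1 < N)%N), ord_pred (Ordinal H) = Ordinal (ltnW H).
  by move=> j H; apply/val_inj => /=; rewrite modnDr modn_small // ltnW.
have Qform : forall Q : 'I_N -> R, stationary p (typeI_F c rb (N:=N)) Q ->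
    forall x : 'I_N, Q x = P ^+ x * cc.
  move=> Q [Q0 sQ eQ].
  have eq y : Q y = P * Q (ord_pred y) + (Ordinal N0 == y)%:R * (1-P).
    by rewrite eQ rhs.
  have step : forall j (H : (j.+1 < N)%N), Q (Ordinal H) = P * Q (Ordinal (ltnW H)).
    move=> j H; rewrite eq opS.
    have -> : (Ordinal N0 == Ordinal H) = false by [].
    by rewrite mul0r addr0.
  have pw : forall j (H : (j < N)%N), Q (Ordinal H) = P ^+ j * Q (Ordinal N0).
    elim=> [|j IH] H; first by rewrite expr0 mul1r; congr Q; apply/val_inj.
    by rewrite step IH exprS mulrA.
  have q0 : Q (Ordinal N0) = cc.
    have := eq (Ordinal N0); rewrite eqxx mul1r op0 (pw N.-1 HN) mulrA -exprS prednK //.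
    move=> h; have h2 : Q (Ordinal N0) * (1 - P ^+ N) = 1 - P by lra.
    by rewrite /cc -h2 mulfK.
  by case=> j H; rewrite pw q0.
have ccD : cc * (1 - P ^+ N) = 1 - P by rewrite /cc mulfVK.
have ccG : forall n, cc * \sum_(i < n) P ^+ i = (1 - P ^+ n) / (1 - P ^+ N).
  by move=> n; rewrite /cc mulrAC geo.
have k1 : (0 < k)%N by rewrite /k /ceil_lg up_log_gt0.
have mN : (2 ^ k - N <= N)%N.
  have h : (2 ^ k.-1 < N)%N := up_log_gtn (isT : (1 < 2)%N) N2.
  have e : (2 ^ k = 2 * 2 ^ k.-1)%N by rewrite -expnS prednK.
  rewrite e; lia.
have perS : forall x s, (size (c s))%:R - (size (typeI_E c rb pi x s))%:R =
    (if inR c rb s then ((x < N.-1)%N)%:R else - (size (pi x))%:R) :> R.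
  move=> x s; rewrite /typeI_E /tcut; move: (csz s); case: (c s) => // b t _ /=.
  case: (inR c rb s) => //; first case: ltnP => _ /=.
  - by rewrite -natr1; ring.
  - by rewrite subrr.
  - by rewrite /= size_cat -!natr1 natrD; ring.
have formula : forall Q : 'I_N -> R, stationary p (typeI_F c rb (N:=N)) Q ->
        L_T p c - avg_len p (typeI_E c rb pi) Q =
          (1 - P ^+ (N - 1)) / (1 - P ^+ N) * P
          + (1 - P ^+ (2 ^ k - N)) / (1 - P ^+ N) * (1 - P)
          - k%:R * (1 - P).
  move=> Q HQ; have Qx := Qform Q HQ; case: HQ => Q0 sQ _.
  have LT : L_T p c = \sum_x \sum_s p s * Q x * (size (c s))%:R.
    rewrite exchange_big /L_T; apply: eq_bigr => s _.
    by under eq_bigr do rewrite mulrAC; rewrite -big_distrr /= sQ mulr1.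
  rewrite LT /avg_len -sumrB.
  have perX : forall x, \sum_s (p s * Q x * (size (c s))%:R
        - p s * Q x * (size (typeI_E c rb pi x s))%:R) =
      Q x * (((x < N.-1)%N)%:R * P - (size (pi x))%:R * (1 - P)).
    move=> x; under eq_bigr do rewrite -mulrBr perS.
    rewrite (bigID (inR c rb)) /=.
    under eq_bigr => s Hs do rewrite Hs.
    under [X in _ + X]eq_bigr => s Hs do rewrite (negbTE Hs).
    rewrite -!big_distrl /= sumL.
    rewrite (_ : \sum_(s | inR c rb s) p s = P) //; ring.
  under eq_bigr do rewrite -sumrB perX.
  have szpi : forall x : 'I_N, (size (pi x))%:R = k%:R - ((x < 2 ^ k - N)%N)%:R :> R.
    move=> x; rewrite pisz -/k; case: ifP => _ /=; last by rewrite subr0.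
    by rewrite -[in RHS](prednK k1) -natr1; ring.
  under eq_bigr do rewrite Qx szpi.
  rewrite (eq_bigr (fun x : 'I_N => cc * P * (P ^+ x * ((x < N.-1)%N)%:R)
     - (1 - P) * k%:R * cc * P ^+ x + cc * (1 - P) * (P ^+ x * ((x < 2 ^ k - N)%N)%:R)));
    last by move=> x _; ring.
  rewrite big_split sumrB /= -!big_distrr /= !narrow_geo ?leq_pred //.
  have hD : (1 - P) * (\sum_(i < N) P ^+ i) / (1 - P ^+ N) = 1 by rewrite geo divff.
  have -> : k%:R * (1 - P) = k%:R * (1 - P) * ((1 - P) * (\sum_(i < N) P ^+ i) / (1 - P ^+ N)).
    by rewrite hD mulr1.
  rewrite subn1 -(@geo _ P N.-1) -(@geo _ P (2 ^ k - N)) /cc; ring.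
split.
- exists (fun x : 'I_N => P ^+ x * cc).
  have cc0 : 0 <= cc by rewrite /cc divr_ge0 // subr_ge0 ltW.
  have sQ : \sum_(x < N) P ^+ x * cc = 1.
    by rewrite -big_distrl /= mulrC ccG divff.
  split => // [x|y]; first by rewrite mulr_ge0 // exprn_ge0 // ltW.
  rewrite (rhs (fun x : 'I_N => P ^+ x * cc) sQ); case: y => [[|j] H].
  + have -> : Ordinal H = Ordinal N0 by apply/val_inj.
    rewrite op0 eqxx /= mulrA -exprS prednK // -ccD; ring.
  + rewrite opS; have -> : (Ordinal N0 == Ordinal H) = false by [].
    by rewrite mul0r addr0 exprS mulrA.
- exact: formula.
- move=> e2 Q HQ; rewrite (formula Q HQ).
  have -> : k = 1%N by rewrite /k e2 /ceil_lg up_lognn.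
  rewrite e2 /= (_ : (2 - 1)%N = 1%N) // (_ : (2 ^ 1 - 2)%N = 0%N) // expr0 subrr.
  congr (Num.max _ 0).
  have h1 : 1 + P != 0 by rewrite gt_eqF // ltr_wpDr // ltW.
  have h2 : 1 - P ^+ 2 != 0 by rewrite subr_eq0 eq_sym lt_eqF // exprn_ilt1 // ltW.
  by field; rewrite ?h1 ?h2.
- move=> hs; rewrite lt_max; apply/orP; left.
  have s0 : 0 <= Num.sqrt (5 : R) by rewrite sqrtr_ge0.
  have s5 : Num.sqrt (5 : R) ^+ 2 = 5 by rewrite sqr_sqrtr.
  apply: divr_gt0; last by lra.
  nra.
Qed.
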